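(* Let $p,q\ge2$, $f(z,w)=z^p+w^q$, and let $a,b\in\mathbb{C}\setminus\{0\}$. Let $c_1,c_2\in\mathbb{C}\setminus\{0\}$ satisfy $c_1^p=a\bar c_1$ and $c_2^q=b\bar c_2$, and put $\mu=a\bar c_1/(b\bar c_2)$. If $P(u,v;\mu)=\mu(u^p+\bar u)+v^q+\bar v$ is an excellent map $\mathbb{R}^4\to\mathbb{R}^2$, then there exists a linear deformation $f_t$, $t\in[0,1]$, of $f$ consisting of excellent maps for $t\in(0,1]$ and satisfying $f_1(z,w)=f(z,w)+a\bar z+b\bar w$. Moreover, if $P$ has no definite fold, then neither does $f_t$ for any $t\in(0,1]$.
   Context: A linear deformation of $f$ is a family $f_t(z,w)=f(z,w)+a_1(t)z+b_1(t)w+a_2(t)\bar z+b_2(t)\bar w$, $t\in[0,1]$, with $a_1,b_1,a_2,b_2$ real-analytic complex-valued functions of $t$ vanishing at $t=0$. A smooth map $g:X^4\to Y^2$ is an excellent map if for every point there are local coordinates centered at it and its image in which $g$ is one of: $(x_1,x_2)$; $(x_1,x_2^2+x_3^2+x_4^2)$ (definite fold); $(x_1,x_2^2+x_3^2-x_4^2)$ (indefinite fold); $(x_1,x_2^2\pm x_3^2+x_1x_4+x_4^3)$ (cusp). *)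

(* Defs.v *)
From Stdlib Require Import Reals Lra List.
From Stdlib Require Fin.
Import ListNotations.
Open Scope R_scope.

Definition Cplx := (R * R)%type.
Definition RtoC (x : R) : Cplx := (x, 0).
Definition Cadd (z w : Cplx) : Cplx := (fst z + fst w, snd z + snd w).
Definition Cmul (z w : Cplx) : Cplx :=
  (fst z * fst w - snd z * snd w, fst z * snd w + snd z * fst w).
Definition Cconj (z : Cplx) : Cplx := (fst z, - snd z).
Definition Cinv (z : Cplx) : Cplx :=
  (fst z / (fst z ^ 2 + snd z ^ 2), - snd z / (fst z ^ 2 + snd z ^ 2)).
Definition Cdiv (z w : Cplx) : Cplx := Cmul z (Cinv w).
Fixpoint Cpow (z : Cplx) (n : nat) : Cplx :=
  match n with O => (1, 0) | S k => Cmul z (Cpow z k) end.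
Definition C0 : Cplx := (0, 0).

Definition Rn (n : nat) := Fin.t n -> R.

Definition upd {n} (x : Rn n) (i : Fin.t n) (h : R) : Rn n :=
  fun j => if Fin.eq_dec i j then x j + h else x j.

Definition origin (n : nat) : Rn n := fun _ => 0.

Definition near {n} (x y : Rn n) (d : R) : Prop := forall i, Rabs (y i - x i) < d.

Definition is_open {n} (U : Rn n -> Prop) : Prop :=
  forall x, U x -> exists eps, 0 < eps /\ forall y, near x y eps -> U y.

Definition cont_at {n} (g : Rn n -> R) (x : Rn n) : Prop :=
  forall eps, 0 < eps -> exists d, 0 < d /\
    forall y, near x y d -> Rabs (g y - g x) < eps.

Definition partial_on {n} (U : Rn n -> Prop) (i : Fin.t n) (f g : Rn n -> R) : Prop :=
  forall x, U x -> derivable_pt_lim (fun h => f (upd x i h)) 0 (g x).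

Inductive iter_partial {n} (U : Rn n -> Prop) :
  list (Fin.t n) -> (Rn n -> R) -> (Rn n -> R) -> Prop :=
| ip_nil : forall f, iter_partial U [] f f
| ip_cons : forall i l f g h,
    partial_on U i f g -> iter_partial U l g h -> iter_partial U (i :: l) f h.

Definition smooth_on {n} (U : Rn n -> Prop) (f : Rn n -> R) : Prop :=
  forall l, exists g, iter_partial U l f g /\ forall x, U x -> cont_at g x.

Definition smooth_map_on {n m} (U : Rn n -> Prop) (F : Rn n -> Rn m) : Prop :=
  forall j, smooth_on U (fun x => F x j).

Definition chart_at {n} (x0 : Rn n) (U V : Rn n -> Prop) (phi phinv : Rn n -> Rn n) : Prop :=
  is_open U /\ is_open V /\ U x0 /\ phi x0 = origin n /\
  smooth_map_on U phi /\ smooth_map_on V phinv /\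
  (forall x, U x -> V (phi x) /\ phinv (phi x) = x) /\
  (forall y, V y -> U (phinv y) /\ phi (phinv y) = y).

Definition local_form (g : Rn 4 -> Rn 2) (N : Rn 4 -> Rn 2) (x : Rn 4) : Prop :=
  exists U V phi phinv U' V' psi psinv,
    chart_at x U V phi phinv /\ chart_at (g x) U' V' psi psinv /\
    (forall y, U y -> U' (g y)) /\
    (forall u, V u -> psi (g (phinv u)) = N u).

(* coordinates: x1,x2,x3,x4 are indices 0,1,2,3 *)
Definition ix4 (k : nat) : Fin.t 4 :=
  match k with
  | O => Fin.F1
  | 1%nat => Fin.FS Fin.F1
  | 2%nat => Fin.FS (Fin.FS Fin.F1)
  | _ => Fin.FS (Fin.FS (Fin.FS Fin.F1))
  end.
Definition mk2 (a b : R) : Rn 2 :=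
  fun i => match proj1_sig (Fin.to_nat i) with O => a | _ => b end.
Definition mk4 (a b c d : R) : Rn 4 :=
  fun i => match proj1_sig (Fin.to_nat i) with
           | O => a | 1%nat => b | 2%nat => c | _ => d end.
Definition x_ (u : Rn 4) (k : nat) : R := u (ix4 k).

Definition NF_regular (u : Rn 4) : Rn 2 := mk2 (x_ u 0) (x_ u 1).
Definition NF_definite_fold (u : Rn 4) : Rn 2 :=
  mk2 (x_ u 0) (x_ u 1 ^ 2 + x_ u 2 ^ 2 + x_ u 3 ^ 2).
Definition NF_indefinite_fold (u : Rn 4) : Rn 2 :=
  mk2 (x_ u 0) (x_ u 1 ^ 2 + x_ u 2 ^ 2 - x_ u 3 ^ 2).
Definition NF_cusp (s : R) (u : Rn 4) : Rn 2 :=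
  mk2 (x_ u 0) (x_ u 1 ^ 2 + s * x_ u 2 ^ 2 + x_ u 0 * x_ u 3 + x_ u 3 ^ 3).

Definition excellent (g : Rn 4 -> Rn 2) : Prop :=
  forall x,
    local_form g NF_regular x \/ local_form g NF_definite_fold x \/
    local_form g NF_indefinite_fold x \/
    local_form g (NF_cusp 1) x \/ local_form g (NF_cusp (-1)) x.

Definition has_definite_fold (g : Rn 4 -> Rn 2) : Prop :=
  exists x, local_form g NF_definite_fold x.

(* Cplx^2 = R^4 via (z,w) = (x1 + i x2, x3 + i x4); Cplx = R^2 via (Re, Im) *)
Definition realify (F : Cplx -> Cplx -> Cplx) : Rn 4 -> Rn 2 :=
  fun u => let r := F (x_ u 0, x_ u 1) (x_ u 2, x_ u 3) in mk2 (fst r) (snd r).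

Definition real_analytic_01 (h : R -> R) : Prop :=
  forall t0, 0 <= t0 <= 1 -> exists r (c : nat -> R), 0 < r /\
    forall t, 0 <= t <= 1 -> Rabs (t - t0) < r ->
      infinite_sum (fun k => c k * (t - t0) ^ k) (h t).

Definition C_analytic_01 (h : R -> Cplx) : Prop :=
  real_analytic_01 (fun t => fst (h t)) /\ real_analytic_01 (fun t => snd (h t)).

Definition lin_def (f : Cplx -> Cplx -> Cplx) (a1 b1 a2 b2 : R -> Cplx) (t : R) : Cplx -> Cplx -> Cplx :=
  fun z w => Cadd (Cadd (Cadd (Cadd (f z w) (Cmul (a1 t) z)) (Cmul (b1 t) w))
                        (Cmul (a2 t) (Cconj z))) (Cmul (b2 t) (Cconj w)).

Definition is_linear_deformation (a1 b1 a2 b2 : R -> Cplx) : Prop :=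
  C_analytic_01 a1 /\ C_analytic_01 b1 /\ C_analytic_01 a2 /\ C_analytic_01 b2 /\
  a1 0 = C0 /\ b1 0 = C0 /\ a2 0 = C0 /\ b2 0 = C0.

Definition fpq (p q : nat) : Cplx -> Cplx -> Cplx := fun z w => Cadd (Cpow z p) (Cpow w q).

Definition Pmap (p q : nat) (mu : Cplx) : Cplx -> Cplx -> Cplx :=
  fun u v => Cadd (Cadd (Cmul mu (Cadd (Cpow u p) (Cconj u))) (Cpow v q)) (Cconj v).

(* Main.v *)
Require Import Defs.
From Stdlib Require Import Reals Lra Lia List FunctionalExtensionality.
Import ListNotations.
Open Scope R_scope.


Lemma upd_ext {n} (x : Rn n) i j h k :
  upd (upd x i h) j k = fun m => x m + (if Fin.eq_dec i m then h else 0) + (if Fin.eq_dec j m then k else 0).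
Proof.
  apply functional_extensionality; intro m; unfold upd.
  destruct (Fin.eq_dec i m); destruct (Fin.eq_dec j m); lra.
Qed.

Lemma upd_upd_same {n} (x : Rn n) i a b : upd (upd x i a) i b = upd x i (a + b).
Proof.
  apply functional_extensionality; intro m; unfold upd.
  destruct (Fin.eq_dec i m); lra.
Qed.

Lemma upd0 {n} (x : Rn n) i : upd x i 0 = x.
Proof. apply functional_extensionality; intro m; unfold upd; destruct (Fin.eq_dec i m); lra. Qed.

Lemma near_upd2 {n} (y : Rn n) i j h t d :
  Rabs h + Rabs t < d -> near y (upd (upd y j h) i t) d.
Proof.
  intros H m; unfold upd.
  destruct (Fin.eq_dec j m); destruct (Fin.eq_dec i m);
  try (replace (y m + h + t - y m) with (h + t) by ring;
       eapply Rle_lt_trans; [apply Rabs_triang|lra]);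
  try (replace (y m + h - y m) with h by ring; pose proof (Rabs_pos t); lra);
  try (replace (y m + t - y m) with t by ring; pose proof (Rabs_pos h); lra);
  try (replace (y m - y m) with 0 by ring; rewrite Rabs_R0; pose proof (Rabs_pos h); pose proof (Rabs_pos t); lra).
Qed.

Lemma partial_shift {n} (U : Rn n -> Prop) i f g w t0 :
  partial_on U i f g -> U (upd w i t0) ->
  derivable_pt_lim (fun t => f (upd w i t)) t0 (g (upd w i t0)).
Proof.
  intros Hp HU. specialize (Hp _ HU).
  intros eps Heps. destruct (Hp eps Heps) as [del Hd]. exists del.
  intros h Hh0 Hh. specialize (Hd h Hh0 Hh).
  rewrite upd_upd_same in Hd. rewrite Rplus_0_l, upd_upd_same, Rplus_0_r in Hd. exact Hd.
Qed.


Lemma mvt_line {n} (U : Rn n -> Prop) i f di w s :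
  partial_on U i f di ->
  (forall t, Rabs t <= Rabs s -> U (upd w i t)) ->
  exists z, Rabs z <= Rabs s /\ f (upd w i s) - f w = s * di (upd w i z).
Proof.
  intros Hp HU.
  destruct (Rtotal_order s 0) as [Hs|[Hs|Hs]].
  - destruct (MVT_cor2 (fun t => f (upd w i t)) (fun t => di (upd w i t)) s 0 Hs) as [z [Hz1 Hz2]].
    + intros c Hc. apply (partial_shift U); auto. apply HU.
      rewrite !Rabs_left1 by lra. lra.
    + exists z. split. rewrite !Rabs_left1 by lra. lra.
      rewrite upd0 in Hz1. lra.
  - subst. exists 0. rewrite upd0. split. lra. ring.
  - destruct (MVT_cor2 (fun t => f (upd w i t)) (fun t => di (upd w i t)) 0 s Hs) as [z [Hz1 Hz2]].
    + intros c Hc. apply (partial_shift U); auto. apply HU.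
      rewrite !Rabs_right by lra. lra.
    + exists z. split. rewrite !Rabs_right by lra. lra.
      rewrite upd0 in Hz1. lra.
Qed.

Lemma two_term {n} (U : Rn n -> Prop) i j f di dj y c :
  is_open U -> U y -> partial_on U j f dj -> partial_on U i f di -> cont_at di y ->
  derivable_pt_lim (fun h => f (upd (upd y j h) i (c*h))) 0 (dj y + c * di y).
Proof.
  intros HO Hy Hj Hi Hc eps Heps.
  set (K := Rabs c + 1).
  assert (HK : 0 < K) by (unfold K; pose proof (Rabs_pos c); lra).
  destruct (Hj y Hy (eps/2)) as [d1 Hd1]; [lra|].
  destruct (Hc (eps / (2*K))) as [d2 [Hd2 Hd2']].
  { apply Rdiv_lt_0_compat; lra. }
  destruct (HO y Hy) as [d3 [Hd3 Hd3']].
  assert (Hpos : 0 < Rmin d1 (Rmin (d2/K) (d3/K))).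
  { pose proof (cond_pos d1). apply Rmin_pos; auto. apply Rmin_pos; apply Rdiv_lt_0_compat; lra. }
  exists (mkposreal _ Hpos). simpl. intros h Hh0 Hh.
  assert (Hh1 : Rabs h < d1) by (eapply Rlt_le_trans; [exact Hh| apply Rmin_l]).
  assert (Hh2 : Rabs h * K < d2).
  { assert (Rabs h < d2 / K) by (eapply Rlt_le_trans; [exact Hh| eapply Rle_trans;[apply Rmin_r| apply Rmin_l]]).
    apply (Rmult_lt_compat_r K) in H; auto. unfold Rdiv in H. rewrite Rmult_assoc, Rinv_l, Rmult_1_r in H; lra. }
  assert (Hh3 : Rabs h * K < d3).
  { assert (Rabs h < d3 / K) by (eapply Rlt_le_trans; [exact Hh| eapply Rle_trans;[apply Rmin_r| apply Rmin_r]]).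
    apply (Rmult_lt_compat_r K) in H; auto. unfold Rdiv in H. rewrite Rmult_assoc, Rinv_l, Rmult_1_r in H; lra. }
  assert (Hch : Rabs (c*h) = Rabs c * Rabs h) by apply Rabs_mult.
  destruct (mvt_line U i f di (upd y j h) (c*h) Hi) as [z [Hz Hz']].
  { intros t Ht. apply Hd3'. apply near_upd2. unfold K in Hh3. nra. }
  specialize (Hd1 h Hh0 Hh1).
  rewrite Rplus_0_l, upd0 in Hd1.
  assert (Hn : near y (upd (upd y j h) i z) d2) by (apply near_upd2; unfold K in Hh2; nra).
  specialize (Hd2' _ Hn).
  rewrite Rplus_0_l, Rmult_0_r, !upd0.
  replace ((f (upd (upd y j h) i (c * h)) - f y) / h - (dj y + c * di y))
    with (c * (di (upd (upd y j h) i z) - di y) + ((f (upd y j h) - f y) / h - dj y)).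
  2:{ replace (f (upd (upd y j h) i (c * h))) with (f (upd y j h) + c * h * di (upd (upd y j h) i z)) by lra.
      field. auto. }
  eapply Rle_lt_trans; [apply Rabs_triang|].
  rewrite Rabs_mult.
  assert (Rabs c * Rabs (di (upd (upd y j h) i z) - di y) <= Rabs c * (eps / (2*K))).
  { apply Rmult_le_compat_l. apply Rabs_pos. lra. }
  assert (Rabs c * (eps / (2*K)) <= eps/2).
  { unfold K. unfold Rdiv. rewrite Rinv_mult. pose proof (Rabs_pos c).
    assert (Rabs c * / (Rabs c + 1) <= 1).
    { apply (Rmult_le_reg_r (Rabs c + 1)). lra. rewrite Rmult_assoc, Rinv_l by lra. lra. }
    assert (0 < / (Rabs c + 1)) by (apply Rinv_0_lt_compat; lra).
    nra. }
  lra.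
Qed.


Lemma near_upd1 {n} (y : Rn n) i t d : Rabs t < d -> near y (upd y i t) d.
Proof.
  intro H. rewrite <- (upd0 y i) at 2. apply near_upd2. rewrite Rabs_R0. lra.
Qed.

Lemma near_refl {n} (y : Rn n) d : 0 < d -> near y y d.
Proof. intros H m. replace (y m - y m) with 0 by ring. rewrite Rabs_R0. lra. Qed.

Lemma partial_on_ext {n} (U : Rn n -> Prop) i f f' g :
  is_open U -> (forall x, U x -> f x = f' x) -> partial_on U i f g -> partial_on U i f' g.
Proof.
  intros HO He Hp x Hx eps Heps.
  destruct (Hp x Hx eps Heps) as [d Hd].
  destruct (HO x Hx) as [d3 [Hd3 Hd3']].
  assert (Hpos : 0 < Rmin d d3) by (apply Rmin_pos; [apply cond_pos|lra]).
  exists (mkposreal _ Hpos). simpl. intros h Hh0 Hh.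
  assert (Rabs h < d) by (eapply Rlt_le_trans; [exact Hh|apply Rmin_l]).
  assert (Rabs h < d3) by (eapply Rlt_le_trans; [exact Hh|apply Rmin_r]).
  rewrite <- !He. apply Hd; auto.
  - apply Hd3'. rewrite upd0. apply near_refl; auto.
  - apply Hd3'. apply near_upd1. rewrite Rplus_0_l. auto.
Qed.

Lemma cont_ext {n} (U : Rn n -> Prop) g g' x :
  is_open U -> U x -> (forall y, U y -> g y = g' y) -> cont_at g x -> cont_at g' x.
Proof.
  intros HO Hx He Hc eps Heps.
  destruct (Hc eps Heps) as [d [Hd Hd']].
  destruct (HO x Hx) as [d3 [Hd3 Hd3']].
  exists (Rmin d d3). split. apply Rmin_pos; auto.
  intros y Hy. rewrite <- !He; auto.
  - apply Hd'. intro m. specialize (Hy m). eapply Rlt_le_trans; [exact Hy|apply Rmin_l].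
  - apply Hd3'. intro m. specialize (Hy m). eapply Rlt_le_trans; [exact Hy|apply Rmin_r].
Qed.

Lemma ip_ext {n} (U : Rn n -> Prop) l f f' g :
  is_open U -> (forall x, U x -> f x = f' x) -> iter_partial U l f g ->
  exists g', iter_partial U l f' g' /\ forall x, U x -> g x = g' x.
Proof.
  intros HO He H. destruct H.
  - exists f'. split; [constructor|auto].
  - exists h. split; [|auto]. econstructor; [|eauto]. eapply partial_on_ext; eauto.
Qed.

Lemma ip_lin {n} (U : Rn n -> Prop) l c : forall f g F G,
  iter_partial U l f F -> iter_partial U l g G ->
  iter_partial U l (fun x => f x + c * g x) (fun x => F x + c * G x).
Proof.
  induction l as [|i l IH]; intros f g F G H1 H2.
  - inversion H1; inversion H2; subst. constructor.
  - inversion H1; subst. inversion H2; subst.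
    econstructor; [|apply IH; eauto].
    intros x Hx. specialize (H3 x Hx). specialize (H4 x Hx).
    apply (derivable_pt_lim_plus _ _ _ _ _ H3 (derivable_pt_lim_scal _ c _ _ H4)).
Qed.

Lemma cont_lin {n} (f g : Rn n -> R) c x :
  cont_at f x -> cont_at g x -> cont_at (fun y => f y + c * g y) x.
Proof.
  intros Hf Hg eps Heps.
  set (K := Rabs c + 1).
  assert (HK : 0 < K) by (unfold K; pose proof (Rabs_pos c); lra).
  destruct (Hf (eps/2)) as [d1 [Hd1 Hd1']]; [lra|].
  destruct (Hg (eps/(2*K))) as [d2 [Hd2 Hd2']]; [apply Rdiv_lt_0_compat; lra|].
  exists (Rmin d1 d2). split; [apply Rmin_pos; auto|].
  intros y Hy.
  assert (A1 : near x y d1) by (intro m; specialize (Hy m); eapply Rlt_le_trans; [exact Hy|apply Rmin_l]).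
  assert (A2 : near x y d2) by (intro m; specialize (Hy m); eapply Rlt_le_trans; [exact Hy|apply Rmin_r]).
  specialize (Hd1' y A1). specialize (Hd2' y A2).
  replace (f y + c * g y - (f x + c * g x)) with ((f y - f x) + c * (g y - g x)) by ring.
  eapply Rle_lt_trans; [apply Rabs_triang|]. rewrite Rabs_mult.
  assert (Rabs c * Rabs (g y - g x) <= Rabs c * (eps / (2*K))).
  { apply Rmult_le_compat_l. apply Rabs_pos. lra. }
  assert (Rabs c * (eps / (2*K)) <= eps/2).
  { unfold K. unfold Rdiv. rewrite Rinv_mult. pose proof (Rabs_pos c).
    assert (Rabs c * / (Rabs c + 1) <= 1).
    { apply (Rmult_le_reg_r (Rabs c + 1)). lra. rewrite Rmult_assoc, Rinv_l by lra. lra. }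
    assert (0 < / (Rabs c + 1)) by (apply Rinv_0_lt_compat; lra).
    nra. }
  lra.
Qed.

Lemma smooth_lin {n} (U : Rn n -> Prop) f g c :
  smooth_on U f -> smooth_on U g -> smooth_on U (fun x => f x + c * g x).
Proof.
  intros Hf Hg l. destruct (Hf l) as [F [HF HF']]. destruct (Hg l) as [G [HG HG']].
  exists (fun x => F x + c * G x). split. apply ip_lin; auto.
  intros x Hx. apply cont_lin; auto.
Qed.

Lemma smooth_cont {n} (U : Rn n -> Prop) f x : smooth_on U f -> U x -> cont_at f x.
Proof.
  intros H Hx. destruct (H []) as [g [Hg Hg']]. inversion Hg; subst. auto.
Qed.

Lemma deriv_smooth {n} (U : Rn n -> Prop) f k :
  is_open U -> smooth_on U f -> exists d, partial_on U k f d /\ smooth_on U d.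
Proof.
  intros HO Hs. destruct (Hs [k]) as [g [Hg _]]. inversion Hg as [|? ? ? d0 ? Hp0 Hr0]; subst.
  exists d0. split; auto.
  intro l. destruct (Hs (k :: l)) as [g' [Hg' Hc']]. inversion Hg' as [|? ? ? g1 ? Hp1 H6]; subst.
  assert (Heq : forall x, U x -> g1 x = d0 x).
  { intros x Hx. eapply uniqueness_limite; [apply Hp1|apply Hp0]; auto. }
  destruct (ip_ext U l g1 d0 g' HO Heq H6) as [g'' [Hi He]].
  exists g''. split; auto. intros x Hx. eapply cont_ext; eauto.
Qed.


Definition E {n} (i j : Fin.t n) (c : R) (x : Rn n) : Rn n := upd x i (c * x j).

Definition good {n} (T : Rn n -> Rn n) : Prop :=
 (forall U f, is_open U -> smooth_on U f -> smooth_on (fun x => U (T x)) (fun x => f (T x))) /\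
 (forall m (V : Rn m -> Prop) G, smooth_map_on V G -> smooth_map_on V (fun u => T (G u))) /\
 (forall U, is_open U -> is_open (fun x => U (T x))).

Lemma E_near {n} (i j : Fin.t n) c x y d :
  near x y d -> near (E i j c x) (E i j c y) (d * (1 + Rabs c)).
Proof.
  intros H m. unfold E, upd. pose proof (H m). pose proof (H j). pose proof (Rabs_pos c).
  pose proof (Rabs_pos (y m - x m)).
  destruct (Fin.eq_dec i m).
  - replace (y m + c * y j - (x m + c * x j)) with ((y m - x m) + c * (y j - x j)) by ring.
    eapply Rle_lt_trans; [apply Rabs_triang|]. rewrite Rabs_mult.
    assert (Rabs c * Rabs (y j - x j) <= Rabs c * d) by (apply Rmult_le_compat_l; lra). nra.
  - nra.
Qed.

Lemma E_open {n} (i j : Fin.t n) c U : is_open U -> is_open (fun x => U (E i j c x)).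
Proof.
  intros HO x Hx. destruct (HO _ Hx) as [e [He He']].
  pose proof (Rabs_pos c).
  exists (e / (1 + Rabs c)). split. apply Rdiv_lt_0_compat; lra.
  intros y Hy. apply He'. apply (E_near i j c) in Hy.
  replace (e / (1 + Rabs c) * (1 + Rabs c)) with e in Hy by (field; lra). auto.
Qed.

Lemma E_cont {n} (i j : Fin.t n) c f x :
  cont_at f (E i j c x) -> cont_at (fun y => f (E i j c y)) x.
Proof.
  intros Hc eps Heps. destruct (Hc eps Heps) as [d [Hd Hd']].
  pose proof (Rabs_pos c).
  exists (d / (1 + Rabs c)). split. apply Rdiv_lt_0_compat; lra.
  intros y Hy. apply Hd'. apply (E_near i j c) in Hy.
  replace (d / (1 + Rabs c) * (1 + Rabs c)) with d in Hy by (field; lra). auto.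
Qed.

Lemma E_upd_other {n} (i j k : Fin.t n) c x h :
  k <> j -> E i j c (upd x k h) = upd (E i j c x) k h.
Proof.
  intro Hk. apply functional_extensionality; intro m. unfold E, upd.
  destruct (Fin.eq_dec k j); [congruence|].
  destruct (Fin.eq_dec i m); destruct (Fin.eq_dec k m); lra.
Qed.

Lemma E_upd_j {n} (i j : Fin.t n) c x h :
  E i j c (upd x j h) = upd (upd (E i j c x) j h) i (c * h).
Proof.
  apply functional_extensionality; intro m. unfold E, upd.
  destruct (Fin.eq_dec j j); [|congruence].
  destruct (Fin.eq_dec i m); destruct (Fin.eq_dec j m); subst; try lra;
  try (destruct (Fin.eq_dec m m); [lra|congruence]);
  try (destruct (Fin.eq_dec i j); [congruence|lra]).
Qed.

Lemma E_transfer {n} (i j : Fin.t n) c U :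
  is_open U -> forall l f, smooth_on U f ->
  exists g, iter_partial (fun x => U (E i j c x)) l (fun x => f (E i j c x)) g /\
            forall x, U (E i j c x) -> cont_at g x.
Proof.
  intros HO l. induction l as [|k l IH]; intros f Hs.
  - exists (fun x => f (E i j c x)). split. constructor.
    intros x Hx. apply E_cont. eapply smooth_cont; eauto.
  - destruct (deriv_smooth U f k HO Hs) as [dk [Hdk Hsk]].
    destruct (deriv_smooth U f j HO Hs) as [dj [Hdj Hsj]].
    destruct (deriv_smooth U f i HO Hs) as [di [Hdi Hsi]].
    destruct (Fin.eq_dec k j) as [ekj|nkj].
    + subst k. assert (Hs' : smooth_on U (fun x => dj x + c * di x)) by (apply smooth_lin; auto).
      destruct (IH _ Hs') as [g [Hg Hg']]. exists g. split; auto.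
      econstructor; [|exact Hg].
      intros x Hx. simpl.
      assert (Hfe : (fun h => f (E i j c (upd x j h))) = (fun h => f (upd (upd (E i j c x) j h) i (c*h)))).
      { apply functional_extensionality; intro h. rewrite E_upd_j. auto. }
      rewrite Hfe. apply two_term with (U := U); auto.
      eapply smooth_cont; eauto.
    + destruct (IH _ Hsk) as [g [Hg Hg']]. exists g. split; auto.
      econstructor; [|exact Hg].
      intros x Hx. simpl.
      assert (Hfe : (fun h => f (E i j c (upd x k h))) = (fun h => f (upd (E i j c x) k h))).
      { apply functional_extensionality; intro h. rewrite E_upd_other; auto. }
      rewrite Hfe. apply Hdk. auto.
Qed.

Lemma E_good {n} (i j : Fin.t n) c : good (E i j c).
Proof.
  split; [|split].
  - intros U f HO Hs l. destruct (E_transfer i j c U HO l f Hs) as [g [H1 H2]]. eauto.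
  - intros m V G HG k. unfold E, upd.
    destruct (Fin.eq_dec i k).
    + subst. apply (smooth_lin V (fun u => G u k) (fun u => G u j) c); apply HG.
    + apply HG.
  - apply E_open.
Qed.

Lemma good_comp {n} (T1 T2 : Rn n -> Rn n) : good T1 -> good T2 -> good (fun x => T1 (T2 x)).
Proof.
  intros [A1 [B1 C1]] [A2 [B2 C2]]. split; [|split].
  - intros U f HO Hs. exact (A2 (fun y => U (T1 y)) (fun y => f (T1 y)) (C1 U HO) (A1 U f HO Hs)).
  - intros m V G HG. apply B1. apply B2. auto.
  - intros U HO. apply (C2 (fun y => U (T1 y))). auto.
Qed.

Lemma good_ext {n} (T T' : Rn n -> Rn n) : (forall x, T x = T' x) -> good T -> good T'.
Proof.
  intros H G. replace T' with T; auto. apply functional_extensionality; auto.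
Qed.


Definition cm {n} (i j : Fin.t n) (r s : R) (x : Rn n) : Rn n :=
  fun k => if Fin.eq_dec i k then r * x i - s * x j
           else if Fin.eq_dec j k then s * x i + r * x j else x k.

Ltac decide_eqs := repeat match goal with |- context [Fin.eq_dec ?a ?b] =>
  let e := fresh "e" in destruct (Fin.eq_dec a b) as [e|e];
    [try (exfalso; congruence) | try (exfalso; congruence)] end.

Ltac split_k i j k := destruct (Fin.eq_dec k i); [subst k|]; [|destruct (Fin.eq_dec k j); [subst k|]].

Lemma E_same {n} (i j : Fin.t n) c x : E i j c x i = x i + c * x j.
Proof. unfold E, upd. destruct (Fin.eq_dec i i); [auto|congruence]. Qed.
Lemma E_other {n} (i j : Fin.t n) c x m : i <> m -> E i j c x m = x m.
Proof. intro H. unfold E, upd. destruct (Fin.eq_dec i m); [congruence|auto]. Qed.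
Ltac evalE := repeat (rewrite E_same || (rewrite E_other by congruence)).

Lemma cm_good {n} (i j : Fin.t n) r s : i <> j -> (r <> 0 \/ s <> 0) -> good (cm i j r s).
Proof.
  intros Hij Hrs.
  destruct (Req_dec r 0) as [Hr|Hr].
  - assert (Hs : s <> 0) by tauto. subst r.
    apply (good_ext (fun x => E j j (s-1) (E i i (s-1) (E j i 1 (E i j (-1) (E j i 1 x)))))).
    + intro x. apply functional_extensionality; intro k. unfold cm.
      split_k i j k; decide_eqs; evalE; ring.
    + exact (good_comp _ _ (E_good j j (s-1)) (good_comp _ _ (E_good i i (s-1))
         (good_comp _ _ (E_good j i 1) (good_comp _ _ (E_good i j (-1)) (E_good j i 1))))).
  - apply (good_ext (fun x => E j i (s/r) (E j j (r + s*s/r - 1) (E i i (r-1) (E i j (-s/r) x))))).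
    + intro x. apply functional_extensionality; intro k. unfold cm.
      split_k i j k; decide_eqs; evalE; field; auto.
    + exact (good_comp _ _ (E_good j i (s/r)) (good_comp _ _ (E_good j j (r + s*s/r - 1))
         (good_comp _ _ (E_good i i (r-1)) (E_good i j (-s/r))))).
Qed.

Lemma cm_inv {n} (i j : Fin.t n) r s r' s' x :
  i <> j -> r' * r - s' * s = 1 -> r' * s + s' * r = 0 ->
  cm i j r' s' (cm i j r s x) = x.
Proof.
  intros Hij H1 H2. apply functional_extensionality; intro k. unfold cm.
  split_k i j k; decide_eqs.
  - replace (r' * (r * x i - s * x j) - s' * (s * x i + r * x j)) with ((r' * r - s' * s) * x i - (r' * s + s' * r) * x j) by ring.
    rewrite H1, H2; ring.
  - replace (s' * (r * x i - s * x j) + r' * (s * x i + r * x j)) with ((r' * r - s' * s) * x j + (r' * s + s' * r) * x i) by ring.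
    rewrite H1, H2; ring.
  - auto.
Qed.

Lemma cm_comm {n} (i j k l : Fin.t n) r s r' s' x :
  i <> k -> i <> l -> j <> k -> j <> l ->
  cm i j r s (cm k l r' s' x) = cm k l r' s' (cm i j r s x).
Proof.
  intros. apply functional_extensionality; intro m. unfold cm.
  destruct (Fin.eq_dec m i); [subst m|]; [|destruct (Fin.eq_dec m j); [subst m|]];
  [| |destruct (Fin.eq_dec m k); [subst m|]; [|destruct (Fin.eq_dec m l); [subst m|]]];
  decide_eqs; auto.
Qed.


Lemma chart_transfer {n} (T Tinv : Rn n -> Rn n) x0 U V phi phinv :
  good T -> good Tinv -> (forall u, Tinv (T u) = u) -> (forall u, T (Tinv u) = u) ->
  chart_at x0 U V phi phinv ->
  chart_at (T x0) (fun x => U (Tinv x)) V (fun x => phi (Tinv x)) (fun u => T (phinv u)).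
Proof.
  intros [_ [GT _]] [GI1 [_ GI3]] H1 H2 [HU [HV [Hx0 [Hphi [Hs1 [Hs2 [Hb1 Hb2]]]]]]].
  split; [apply GI3; auto|]. split; auto. split; [rewrite H1; auto|].
  split; [rewrite H1; auto|]. split.
  { intro j. apply (GI1 U (fun u => phi u j)); auto. }
  split. { apply GT. auto. }
  split.
  - intros x Hx. destruct (Hb1 _ Hx) as [A B]. split; auto. rewrite B. auto.
  - intros u Hu. destruct (Hb2 _ Hu) as [A B]. rewrite H1. split; auto.
Qed.

Lemma lf_transfer (L Linv : Rn 4 -> Rn 4) (M Minv : Rn 2 -> Rn 2) g g' N y :
  good L -> good Linv -> good M -> good Minv ->
  (forall u, Linv (L u) = u) -> (forall u, L (Linv u) = u) ->
  (forall v, Minv (M v) = v) -> (forall v, M (Minv v) = v) ->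
  (forall x, g' x = M (g (Linv x))) ->
  local_form g N y -> local_form g' N (L y).
Proof.
  intros GL GLi GM GMi H1 H2 H3 H4 Hg [U [V [phi [phinv [U' [V' [psi [psinv [C1 [C2 [HUU HN]]]]]]]]]]].
  exists (fun x => U (Linv x)), V, (fun x => phi (Linv x)), (fun u => L (phinv u)),
         (fun z => U' (Minv z)), V', (fun z => psi (Minv z)), (fun v => M (psinv v)).
  split; [apply chart_transfer; auto|].
  split. { replace (g' (L y)) with (M (g y)) by (rewrite Hg, H1; auto). apply chart_transfer; auto. }
  split.
  - intros x Hx. rewrite Hg, H3. auto.
  - intros u Hu. rewrite Hg, H3, H1. auto.
Qed.


Ltac cx := repeat match goal with z : Cplx |- _ => destruct z end;
           unfold Cmul, Cadd, Cconj, RtoC, C0, Cinv, Cdiv in *; simpl in *.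

Lemma Cpow_mul x y n : Cpow (Cmul x y) n = Cmul (Cpow x n) (Cpow y n).
Proof.
  induction n; simpl. cx; f_equal; ring.
  rewrite IHn. generalize (Cpow x n) (Cpow y n). intros. cx. f_equal; ring.
Qed.

Lemma Cpow_RtoC l n : Cpow (RtoC l) n = RtoC (l ^ n).
Proof.
  induction n; simpl. reflexivity. rewrite IHn. cx. f_equal; ring.
Qed.

Lemma key (p q : nat) a b c1 c2 mu l k U V :
  l <> 0 -> k <> 0 -> l ^ p = k ^ q ->
  Cpow c1 p = Cmul a (Cconj c1) -> Cpow c2 q = Cmul b (Cconj c2) ->
  Cmul mu (Cmul b (Cconj c2)) = Cmul a (Cconj c1) ->
  Cadd (Cadd (Cadd (Cadd (fpq p q (Cmul (Cmul (RtoC l) c1) U) (Cmul (Cmul (RtoC k) c2) V))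
      (Cmul C0 (Cmul (Cmul (RtoC l) c1) U))) (Cmul C0 (Cmul (Cmul (RtoC k) c2) V)))
     (Cmul (Cmul (RtoC (l^p/l)) a) (Cconj (Cmul (Cmul (RtoC l) c1) U))))
     (Cmul (Cmul (RtoC (k^q/k)) b) (Cconj (Cmul (Cmul (RtoC k) c2) V)))
  = Cmul (Cmul (RtoC (l^p)) (Cmul b (Cconj c2))) (Pmap p q mu U V).
Proof.
  intros Hl Hk Hlk H1 H2 Hmu.
  unfold fpq, Pmap. rewrite !Cpow_mul, !Cpow_RtoC, H1, H2. rewrite <- Hlk.
  generalize (Cpow U p) (Cpow V q). intros P1 P2.
  transitivity (Cmul (RtoC (l^p)) (Cadd (Cmul (Cmul a (Cconj c1)) (Cadd P1 (Cconj U)))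
        (Cmul (Cmul b (Cconj c2)) (Cadd P2 (Cconj V))))).
  - generalize (l ^ p). intro X. cx. f_equal; field; auto.
  - rewrite <- Hmu. generalize (l ^ p). intro X. cx. f_equal; ring.
Qed.


Lemma ra_mono A n : real_analytic_01 (fun t => A * t ^ n).
Proof.
  intros t0 _. exists 1, (fun k => if Compare_dec.le_lt_dec k n then A * C n k * t0 ^ (n - k) else 0).
  split; [lra|]. intros t _ _.
  set (s := fun k => (if Compare_dec.le_lt_dec k n then A * C n k * t0 ^ (n - k) else 0) * (t - t0) ^ k).
  assert (Hn : sum_f_R0 s n = A * t ^ n).
  { replace (t ^ n) with (((t - t0) + t0) ^ n) by (f_equal; ring). rewrite binomial, scal_sum.
    apply sum_eq. intros i Hi. unfold s. destruct (Compare_dec.le_lt_dec i n); [ring|lia]. }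
  assert (Hm : forall d, sum_f_R0 s (n + d) = A * t ^ n).
  { induction d. rewrite Nat.add_0_r. auto.
    rewrite Nat.add_succ_r. simpl. rewrite IHd. unfold s. destruct (Compare_dec.le_lt_dec (S (n + d)) n); [lia|ring]. }
  intros eps Heps. exists n. intros m Hm'. replace m with (n + (m - n))%nat by lia.
  rewrite Hm, Rdist_eq. lra.
Qed.

Lemma ra_ext h h' : (forall t, h t = h' t) -> real_analytic_01 h -> real_analytic_01 h'.
Proof. intros H. replace h' with h; auto. apply functional_extensionality; auto. Qed.

Lemma cana_scal n a : C_analytic_01 (fun t => Cmul (RtoC (t ^ n)) a).
Proof.
  destruct a as [a1 a2]. split.
  - apply (ra_ext (fun t => a1 * t ^ n)). intro t. unfold Cmul, RtoC; simpl. ring. apply ra_mono.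
  - apply (ra_ext (fun t => a2 * t ^ n)). intro t. unfold Cmul, RtoC; simpl. ring. apply ra_mono.
Qed.

Lemma cana_zero : C_analytic_01 (fun _ => C0).
Proof.
  split; apply (ra_ext (fun t => 0 * t ^ 0)); try (intro; unfold C0; simpl; ring); apply ra_mono.
Qed.


Definition L4 (al be : Cplx) (x : Rn 4) : Rn 4 :=
  cm (ix4 0) (ix4 1) (fst al) (snd al) (cm (ix4 2) (ix4 3) (fst be) (snd be) x).
Definition M2 (m : Cplx) (v : Rn 2) : Rn 2 := cm Fin.F1 (Fin.FS Fin.F1) (fst m) (snd m) v.

Lemma L4_coords al be u :
  (x_ (L4 al be u) 0, x_ (L4 al be u) 1) = Cmul al (x_ u 0, x_ u 1) /\
  (x_ (L4 al be u) 2, x_ (L4 al be u) 3) = Cmul be (x_ u 2, x_ u 3).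
Proof. unfold L4, x_, cm, Cmul. cbn. split; f_equal; ring. Qed.

Lemma fin2_ext (f g : Rn 2) : f Fin.F1 = g Fin.F1 -> f (Fin.FS Fin.F1) = g (Fin.FS Fin.F1) -> f = g.
Proof.
  intros H1 H2. apply functional_extensionality. intro k.
  apply (Fin.caseS' k); auto. intro p0. apply (Fin.caseS' p0); auto. intro p1. inversion p1.
Qed.

Lemma M2_mk2 m y : M2 m (mk2 (fst y) (snd y)) = mk2 (fst (Cmul m y)) (snd (Cmul m y)).
Proof. apply fin2_ext; unfold M2, cm, mk2, Cmul; cbn; ring. Qed.

Lemma nzC z : z <> C0 -> fst z <> 0 \/ snd z <> 0.
Proof.
  destruct z as [x y]; simpl; intro H. destruct (Req_dec x 0); destruct (Req_dec y 0); subst; auto.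
Qed.

Lemma normpos z : z <> C0 -> fst z ^ 2 + snd z ^ 2 <> 0.
Proof. intro H. destruct (nzC z H); nra. Qed.

Lemma Cinv_nz z : z <> C0 -> Cinv z <> C0.
Proof.
  intros H E. pose proof (normpos z H). destruct z as [x y]. unfold Cinv, C0 in E; cbn [fst snd] in *.
  injection E; intros E2 E1. apply H0.
  assert (E1' : x / (x^2+y^2) = 0) by exact E1. assert (E2' : -y / (x^2+y^2) = 0) by exact E2. clear E1 E2.
  rename E1' into E1. rename E2' into E2.
  assert (x = 0). { assert (x = x/(x^2+y^2) * (x^2+y^2)) by (field; auto). rewrite E1 in H1. lra. }
  assert (y = 0). { assert (y = - (-y/(x^2+y^2) * (x^2+y^2))) by (field; auto). rewrite E2 in H2. lra. }
  subst; ring.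
Qed.

Lemma ix_ne : ix4 0 <> ix4 1 /\ ix4 0 <> ix4 2 /\ ix4 0 <> ix4 3 /\ ix4 1 <> ix4 2 /\
              ix4 1 <> ix4 3 /\ ix4 2 <> ix4 3.
Proof.
  cbn. repeat split; intro E; repeat (apply Fin.FS_inj in E); discriminate.
Qed.

Lemma L4_good al be : al <> C0 -> be <> C0 -> good (L4 al be).
Proof.
  intros Ha Hb. pose proof ix_ne as [? [? [? [? [? ?]]]]].
  exact (good_comp _ _ (cm_good _ _ _ _ H (nzC _ Ha)) (cm_good _ _ _ _ H4 (nzC _ Hb))).
Qed.

Lemma M2_good m : m <> C0 -> good (M2 m).
Proof.
  intro Hm. apply cm_good; [|apply nzC; auto]. intro E; discriminate.
Qed.

Lemma cm_inv_C {n} (i j : Fin.t n) z x : i <> j -> z <> C0 ->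
  cm i j (fst (Cinv z)) (snd (Cinv z)) (cm i j (fst z) (snd z) x) = x.
Proof.
  intros Hij Hz. pose proof (normpos z Hz). apply cm_inv; auto;
  destruct z as [r s]; unfold Cinv; cbn [fst snd] in *; field; auto.
Qed.

Lemma cm_C_inv {n} (i j : Fin.t n) z x : i <> j -> z <> C0 ->
  cm i j (fst z) (snd z) (cm i j (fst (Cinv z)) (snd (Cinv z)) x) = x.
Proof.
  intros Hij Hz. pose proof (normpos z Hz). apply cm_inv; auto;
  destruct z as [r s]; unfold Cinv; cbn [fst snd] in *; field; auto.
Qed.

Lemma L4_inv al be u : al <> C0 -> be <> C0 -> L4 (Cinv al) (Cinv be) (L4 al be u) = u.
Proof.
  intros Ha Hb. pose proof ix_ne as [? [? [? [? [? ?]]]]]. unfold L4.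
  rewrite (cm_comm (ix4 2) (ix4 3) (ix4 0) (ix4 1)); auto.
  rewrite cm_inv_C; auto. rewrite cm_inv_C; auto.
Qed.

Lemma L4_inv' al be u : al <> C0 -> be <> C0 -> L4 al be (L4 (Cinv al) (Cinv be) u) = u.
Proof.
  intros Ha Hb. pose proof ix_ne as [? [? [? [? [? ?]]]]]. unfold L4.
  rewrite (cm_comm (ix4 2) (ix4 3) (ix4 0) (ix4 1)); auto.
  rewrite cm_C_inv; auto. rewrite cm_C_inv; auto.
Qed.

Lemma M2_inv m v : m <> C0 -> M2 (Cinv m) (M2 m v) = v.
Proof. intro. apply cm_inv_C; auto. intro E; discriminate. Qed.
Lemma M2_inv' m v : m <> C0 -> M2 m (M2 (Cinv m) v) = v.
Proof. intro. apply cm_C_inv; auto. intro E; discriminate. Qed.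


Lemma Cmul_nz x y : x <> C0 -> y <> C0 -> Cmul x y <> C0.
Proof.
  intros Hx Hy E. pose proof (normpos x Hx). pose proof (normpos y Hy).
  assert (fst (Cmul x y) ^ 2 + snd (Cmul x y) ^ 2 = (fst x ^ 2 + snd x ^ 2) * (fst y ^ 2 + snd y ^ 2)).
  { destruct x, y; unfold Cmul; cbn [fst snd]; ring. }
  rewrite E in H1. cbn [fst snd C0] in H1. unfold C0 in H1. cbn [fst snd] in H1.
  assert ((fst x ^ 2 + snd x ^ 2) * (fst y ^ 2 + snd y ^ 2) <> 0) by (apply Rmult_integral_contrapositive; auto).
  apply H2. rewrite <- H1. ring.
Qed.

Lemma Cconj_nz x : x <> C0 -> Cconj x <> C0.
Proof. destruct x as [r s]; unfold Cconj, C0; cbn [fst snd]; intros H E. injection E; intros. apply H. f_equal; lra. Qed.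

Lemma RtoC_nz l : l <> 0 -> RtoC l <> C0.
Proof. unfold RtoC, C0. intros H E. injection E. auto. Qed.

Lemma Cdiv_mul x y : y <> C0 -> Cmul (Cdiv x y) y = x.
Proof.
  intro H. pose proof (normpos _ H). destruct x as [u v], y as [r s].
  unfold Cdiv, Cmul, Cinv in *. cbn [fst snd] in *. f_equal; field; auto.
Qed.

Theorem lemma3p1 (p q : nat) (a b c1 c2 : Cplx) :
  (2 <= p)%nat -> (2 <= q)%nat ->
  a <> C0 -> b <> C0 -> c1 <> C0 -> c2 <> C0 ->
  Cpow c1 p = Cmul a (Cconj c1) ->
  Cpow c2 q = Cmul b (Cconj c2) ->
  let mu := Cdiv (Cmul a (Cconj c1)) (Cmul b (Cconj c2)) in
  excellent (realify (Pmap p q mu)) ->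
  exists a1 b1 a2 b2 : R -> Cplx,
    is_linear_deformation a1 b1 a2 b2 /\
    (forall t, 0 < t <= 1 -> excellent (realify (lin_def (fpq p q) a1 b1 a2 b2 t))) /\
    (forall z w, lin_def (fpq p q) a1 b1 a2 b2 1 z w =
                 Cadd (Cadd (fpq p q z w) (Cmul a (Cconj z))) (Cmul b (Cconj w))) /\
    (~ has_definite_fold (realify (Pmap p q mu)) ->
       forall t, 0 < t <= 1 ->
         ~ has_definite_fold (realify (lin_def (fpq p q) a1 b1 a2 b2 t))).
Proof.
  intros Hp Hq Ha Hb Hc1 Hc2 H1 H2 mu HP.
  assert (HB : Cmul b (Cconj c2) <> C0) by (apply Cmul_nz; auto; apply Cconj_nz; auto).
  assert (Hmu : Cmul mu (Cmul b (Cconj c2)) = Cmul a (Cconj c1)).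
  { unfold mu. apply Cdiv_mul; auto. }
  set (a2 := fun t => Cmul (RtoC (t ^ (q * (p - 1)))) a).
  set (b2 := fun t => Cmul (RtoC (t ^ (p * (q - 1)))) b).
  exists (fun _ => C0), (fun _ => C0), a2, b2.
  set (ft := fun t => realify (lin_def (fpq p q) (fun _ => C0) (fun _ => C0) a2 b2 t)).
  set (Lam := fun t => Cmul (RtoC (t ^ q)) c1).
  set (Kap := fun t => Cmul (RtoC (t ^ p)) c2).
  set (m := fun t => Cmul (RtoC ((t ^ q) ^ p)) (Cmul b (Cconj c2))).
  assert (Hnz : forall t, 0 < t -> Lam t <> C0 /\ Kap t <> C0 /\ m t <> C0).
  { intros t Ht. unfold Lam, Kap, m.
    repeat split; apply Cmul_nz; auto; apply RtoC_nz; apply pow_nonzero; try apply pow_nonzero; lra. }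
  assert (Hrel : forall t, 0 < t -> forall u, ft t (L4 (Lam t) (Kap t) u) = M2 (m t) (realify (Pmap p q mu) u)).
  { intros t Ht u. unfold ft, realify. destruct (L4_coords (Lam t) (Kap t) u) as [E1 E2].
    rewrite E1, E2. rewrite M2_mk2.
    match goal with |- mk2 (fst ?X) (snd ?X) = mk2 (fst ?Y) (snd ?Y) => assert (X = Y) as -> ; [|reflexivity] end.
    unfold lin_def, a2, b2, Lam, Kap, m.
    assert (E3 : t ^ (q * (p - 1)) = (t ^ q) ^ p / t ^ q).
    { rewrite <- pow_mult. replace (q * p)%nat with (q * (p - 1) + q)%nat by (destruct p; lia).
      rewrite pow_add. field. apply pow_nonzero; lra. }
    assert (E4 : t ^ (p * (q - 1)) = (t ^ p) ^ q / t ^ p).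
    { rewrite <- pow_mult. replace (p * q)%nat with (p * (q - 1) + p)%nat by (destruct q; lia).
      rewrite pow_add. field. apply pow_nonzero; lra. }
    rewrite E3, E4. apply key; auto; try (apply pow_nonzero; lra).
    rewrite <- !pow_mult. f_equal. lia. }
  assert (HT : forall t, 0 < t -> forall N y, local_form (realify (Pmap p q mu)) N y ->
                  local_form (ft t) N (L4 (Lam t) (Kap t) y)).
  { intros t Ht N y Hy. destruct (Hnz t Ht) as [HL [HK Hm]].
    apply (lf_transfer (L4 (Lam t) (Kap t)) (L4 (Cinv (Lam t)) (Cinv (Kap t))) (M2 (m t)) (M2 (Cinv (m t)))
            (realify (Pmap p q mu))); auto.
    - apply L4_good; auto.
    - apply L4_good; apply Cinv_nz; auto.
    - apply M2_good; auto.
    - apply M2_good; apply Cinv_nz; auto.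
    - intro; apply L4_inv; auto.
    - intro; apply L4_inv'; auto.
    - intro; apply M2_inv; auto.
    - intro; apply M2_inv'; auto.
    - intro x. rewrite <- Hrel by auto. rewrite L4_inv'; auto. }
  split; [|split; [|split]].
  - unfold is_linear_deformation. repeat split; try apply cana_zero; try apply cana_scal.
    + unfold a2. rewrite pow_i by nia. unfold Cmul, RtoC, C0; cbn [fst snd]. f_equal; ring.
    + unfold b2. rewrite pow_i by nia. unfold Cmul, RtoC, C0; cbn [fst snd]. f_equal; ring.
  - intros t Ht x. destruct (Hnz t (proj1 Ht)) as [HL [HK Hm]].
    rewrite <- (L4_inv' (Lam t) (Kap t) x HL HK).
    destruct (HP (L4 (Cinv (Lam t)) (Cinv (Kap t)) x)) as [X|[X|[X|[X|X]]]];
      apply (HT t (proj1 Ht)) in X; fold (ft t); auto.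
  - intros z w. unfold lin_def, a2, b2. rewrite !pow1. generalize (fpq p q z w). intro F.
    destruct z, w, a, b, F. unfold Cmul, Cadd, Cconj, RtoC, C0. cbn [fst snd]. f_equal; ring.
  - intros HnP t Ht [x Hx]. apply HnP. destruct (Hnz t (proj1 Ht)) as [HL [HK Hm]].
    exists (L4 (Cinv (Lam t)) (Cinv (Kap t)) x).
    apply (lf_transfer (L4 (Cinv (Lam t)) (Cinv (Kap t))) (L4 (Lam t) (Kap t)) (M2 (Cinv (m t))) (M2 (m t))
            (ft t)); auto.
    + apply L4_good; apply Cinv_nz; auto.
    + apply L4_good; auto.
    + apply M2_good; apply Cinv_nz; auto.
    + apply M2_good; auto.
    + intro; apply L4_inv'; auto.
    + intro; apply L4_inv; auto.
    + intro; apply M2_inv'; auto.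
    + intro; apply M2_inv; auto.
    + intro u. rewrite Hrel by lra. rewrite M2_inv; auto.
Qed.
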